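(* Let $p$ be an odd prime and $q$ a positive integer. The complete graph $K_{qp}$ is a Legendre cordial graph modulo $p$ if and only if $q=1$ and $p=3$.
   Context: For an odd prime $p$ and an integer $a$ not divisible by $p$, $(a/p)$ denotes the Legendre symbol: $1$ if $a$ is a quadratic residue mod $p$, $-1$ otherwise. For a simple connected graph $G$ of order $n$, a bijection $f:V(G)\to\{1,\dots,n\}$ is a Legendre cordial labeling modulo $p$ if the induced edge labeling $f_p^*:E(G)\to\{0,1\}$, defined by $f_p^*(uv)=0$ if $p\mid f(u)+f(v)$ or $((f(u)+f(v))/p)=-1$, and $f_p^*(uv)=1$ if $((f(u)+f(v))/p)=1$, satisfies $|e_{f_p^*}(0)-e_{f_p^*}(1)|\le1$, where $e_{f_p^*}(i)$ is the number of edges with label $i$. A graph admitting such a labeling is a Legendre cordial graph modulo $p$. *)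

(* Defs.v *)
From mathcomp Require Import all_boot all_algebra.
Import GRing.Theory Num.Theory.
Set Implicit Arguments. Unset Strict Implicit. Unset Printing Implicit Defensive.

Definition qres (p a : nat) : bool :=
  (a %% p != 0) && [exists x : 'I_p, (x * x) %% p == a %% p].

Definition legendre (p a : nat) : int :=
  if qres p a then Posz 1 else Negz 0.

Definition edge_label (p : nat) {n : nat} (f : 'I_n -> nat) (u v : 'I_n) : nat :=
  if (p %| f u + f v) then 0 else if legendre p (f u + f v) == Posz 1 then 1 else 0.

(* a simple graph on vertex set 'I_n: symmetric irreflexive relation;
   each edge {u,v} is counted once as the pair u < v *)
Definition simple_graph n (e : rel 'I_n) : Prop :=
  (forall u v, e u v = e v u) /\ (forall u, ~~ e u u).

Definition n_edges_label n (e : rel 'I_n) (p : nat) (f : 'I_n -> nat) (i : nat) : nat :=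
  #|[set uv : 'I_n * 'I_n | [&& uv.1 < uv.2, e uv.1 uv.2 & edge_label p f uv.1 uv.2 == i]]|.

Definition vertex_labeling n (f : 'I_n -> nat) : Prop :=
  injective f /\ (forall v, 1 <= f v <= n).

Definition legendre_cordial_labeling n (e : rel 'I_n) (p : nat) (f : 'I_n -> nat) : Prop :=
  vertex_labeling f /\
  (`|Posz (n_edges_label e p f 0) - Posz (n_edges_label e p f 1)| <= 1)%R.

Definition legendre_cordial {n} (e : rel 'I_n) (p : nat) : Prop :=
  exists f : 'I_n -> nat, legendre_cordial_labeling e p f.

Definition complete_graph n : rel 'I_n := fun u v => u != v.
Arguments complete_graph n u v : clear implicits.

(* Main.v *)
Require Import Defs.
From mathcomp Require Import all_boot all_algebra zify.

Definition lbl p s := if p %| s then 0 else if legendre p s == Posz 1 then 1 else 0.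

Lemma lbl_mod p s : lbl p (s %% p) = lbl p s.
Proof. by rewrite /lbl /legendre /qres /dvdn !modn_mod. Qed.

Lemma lbl01 p s : (lbl p s == 0) + (lbl p s == 1) = 1.
Proof. by rewrite /lbl; case: (p %| s); case: (legendre p s == Posz 1). Qed.

Lemma sum_period (H : nat -> nat) p q :
  \sum_(k < q * p) H (k %% p) = q * \sum_(k < p) H k.
Proof.
elim: q => [|q IH]; first by rewrite mul0n big_ord0.
rewrite mulSn big_split_ord /= mulSn -IH; congr (_ + _).
  by apply: eq_bigr => i _; rewrite modn_small.
by apply: eq_bigr => i _; rewrite modnDl.
Qed.

Lemma sum_perm (H : nat -> nat) p c d : 0 < p -> coprime p d ->
  \sum_(k < p) H ((c + d * k) %% p) = \sum_(k < p) H k.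
Proof.
move=> p0 cop.
pose h (k : 'I_p) : 'I_p := Ordinal (ltn_pmod (c + d * k) p0).
have hinj : injective h.
  move=> a b /(congr1 val) /= /eqP; rewrite eqn_modDl => e.
  apply: val_inj => /=.
  wlog le : a b e / b <= a.
    move=> W; case: (leqP b a) => hab; first exact: W.
    by symmetry; apply: W; [rewrite eq_sym | exact: ltnW].
  move: e; rewrite eqn_mod_dvd ?leq_mul2l ?le ?orbT // -mulnBr Gauss_dvdr //.
  move=> dv; have lt : a - b < p by have := ltn_ord a; lia.
  case h0 : (a - b) dv lt => [|m] dv lt; first by lia.
  by have := dvdn_leq (ltn0Sn m) dv; lia.
symmetry; rewrite (reindex_inj hinj) /=.
by [].
Qed.

Lemma sum_img n (f : 'I_n -> nat) (G : nat -> nat) : vertex_labeling f ->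
  \sum_(v < n) G (f v) = \sum_(k < n) G k.+1.
Proof.
case=> finj frng.
have lt v : f v - 1 < n by have := frng v; lia.
pose g v : 'I_n := Ordinal (lt v).
have ginj : injective g.
  move=> a b /(congr1 val) /= e; apply: finj; have := frng a; have := frng b; lia.
symmetry; rewrite (reindex_inj ginj) /=; apply: eq_bigr => v _.
by congr G; have := frng v; lia.
Qed.

Lemma count_edges n p f i :
  n_edges_label (complete_graph n) p f i =
  \sum_(u < n) \sum_(v < n) ((u < v) && (lbl p (f u + f v) == i)).
Proof.
rewrite /n_edges_label -sum1dep_card big_mkcond /=.
rewrite pair_big /=; apply: eq_bigr => [[u v]] _ /=.
rewrite /complete_graph /edge_label -/(lbl p _).
case: (boolP (u < v)) => h //=.
have -> : (u != v) = true by apply/eqP => e0; rewrite e0 ltnn in h.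
by case: (_ == _).
Qed.

Lemma double_sum n (T : 'I_n -> 'I_n -> bool) : (forall u v, T u v = T v u) ->
  \sum_(u < n) \sum_(v < n) T u v =
  \sum_(u < n) T u u + 2 * \sum_(u < n) \sum_(v < n) ((u < v) && T u v).
Proof.
move=> Tsym.
have E1 : \sum_(u < n) \sum_(v < n) T u v =
   \sum_(u < n) (T u u + (\sum_(v < n) ((u < v) && T u v) + \sum_(v < n) ((v < u) && T u v))).
  apply: eq_bigr => u _; rewrite (bigD1 u) //=; congr (_ + _).
  rewrite -big_split /= big_mkcond /=; apply: eq_bigr => v _.
  case: (ltngtP u v) => h.
  - have -> : (v != u) = true by apply/eqP => e0; rewrite e0 ltnn in h.
    by case: (T u v).
  - have -> : (v != u) = true by apply/eqP => e0; rewrite e0 ltnn in h.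
    by case: (T u v).
  - have e0 : v = u by apply: val_inj. by subst v; rewrite eqxx.
rewrite E1 big_split /= big_split /= mul2n -addnn; congr (_ + (_ + _)).
rewrite exchange_big /=; apply: eq_bigr => u _; apply: eq_bigr => v _.
by rewrite Tsym.
Qed.

Definition Cnt p i := \sum_(k < p) (lbl p k == i).

Lemma row_sum p q (c : nat) i : 0 < p ->
  \sum_(k < q * p) (lbl p (c + k.+1) == i) = q * Cnt p i.
Proof.
move=> p0.
rewrite (eq_bigr (fun k : 'I_(q * p) => (fun r => (lbl p ((c.+1 + 1 * r) %% p) == i) : nat) (k %% p))); last first.
  by move=> k _; rewrite /= mul1n modnDmr lbl_mod addnS addSn.
by rewrite (sum_period (fun r => (lbl p ((c.+1 + 1 * r) %% p) == i) : nat)) (sum_perm (fun r => (lbl p r == i) : nat)) // coprime_sym coprime1n.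
Qed.

Lemma diag_sum p q i : prime p -> odd p ->
  \sum_(k < q * p) (lbl p (k.+1 + k.+1) == i) = q * Cnt p i.
Proof.
move=> pp po; have p0 := prime_gt0 pp.
rewrite (eq_bigr (fun k : 'I_(q * p) => (fun r => (lbl p ((2 + 2 * r) %% p) == i) : nat) (k %% p))); last first.
  move=> k _ /=.
  have -> : (2 + 2 * (k %% p)) %% p = (k.+1 + k.+1) %% p.
    by rewrite -modnDmr modnMmr modnDmr; congr (_ %% p); lia.
  by rewrite lbl_mod.
rewrite (sum_period (fun r => (lbl p ((2 + 2 * r) %% p) == i) : nat)) (sum_perm (fun r => (lbl p r == i) : nat)) // coprime_sym prime_coprime // dvdn2 po //.
Qed.

Lemma key p q (f : 'I_(q * p) -> nat) i : prime p -> odd p -> vertex_labeling f ->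
  2 * n_edges_label (complete_graph (q * p)) p f i + q * Cnt p i
  = q * p * (q * Cnt p i).
Proof.
move=> pp po vf; have p0 := prime_gt0 pp.
have := @double_sum (q * p) (fun u v => lbl p (f u + f v) == i) (fun u v => ltac:(by rewrite /= addnC)).
rewrite -count_edges => E.
have E2 : \sum_(u < q * p) \sum_(v < q * p) (lbl p (f u + f v) == i : nat) = q * p * (q * Cnt p i).
  rewrite (eq_bigr (fun _ => q * Cnt p i)); first by rewrite sum_nat_const card_ord.
  move=> u _; rewrite (@sum_img _ f (fun k => (lbl p (f u + k) == i) : nat)) //.
  exact: row_sum.
have E3 : \sum_(u < q * p) (lbl p (f u + f u) == i : nat) = q * Cnt p i.
  rewrite (@sum_img _ f (fun k => (lbl p (k + k) == i) : nat)) //.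
  exact: diag_sum.
by rewrite -E2 E E3 addnC.
Qed.

Lemma Cnt01 p : Cnt p 0 + Cnt p 1 = p.
Proof.
rewrite /Cnt -big_split /= (eq_bigr (fun => 1)) ?sum_nat_const ?card_ord ?muln1 //.
by move=> k _; rewrite lbl01.
Qed.

Lemma lbl3 : [/\ lbl 3 0 = 0, lbl 3 1 = 1 & lbl 3 2 = 0].
Proof.
split => //.
  rewrite /lbl /legendre /qres /=.
  have -> : [exists x : 'I_3, (x * x) %% 3 == 1 %% 3] by apply/existsP; exists (Ordinal (isT : 1 < 3)).
  by [].
rewrite /lbl /legendre /qres /=.
have -> : [exists x : 'I_3, (x * x) %% 3 == 2 %% 3] = false.
  by apply/existsP => [[[[|[|[|x]]] hx]]] //=.
by [].
Qed.

Theorem corollary3p4 (p q : nat) :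
  prime p -> odd p -> 0 < q ->
  (legendre_cordial (complete_graph (q * p)) p <-> (q = 1 /\ p = 3)).
Proof.
move=> pp po q0; split.
  case=> f [vf H].
  have K0 := @key p q f 0 pp po vf; have K1 := @key p q f 1 pp po vf.
  have C := Cnt01 p.
  have p2 := prime_gt1 pp.
  have p3 : 2 < p by case: p pp po p2 {K0 K1 C H vf f} => [|[|[|]]].
  set a := n_edges_label _ p f 0 in K0 H.
  set b := n_edges_label _ p f 1 in K1 H.
  have ab : a <= b.+1 by lia.
  have ba : b <= a.+1 by lia.
  have neq : Cnt p 0 != Cnt p 1.
    apply/eqP => e; move: po; rewrite -C e addnn odd_double //.
  set c0 := Cnt p 0 in K0 C neq; set c1 := Cnt p 1 in K1 C neq.
  set M := q * p - 1.
  have A0 : 2 * a = M * (q * c0).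
    by rewrite /M mulnBl mul1n; move: K0; set t := q * p * (q * c0); lia.
  have A1 : 2 * b = M * (q * c1).
    by rewrite /M mulnBl mul1n; move: K1; set t := q * p * (q * c1); lia.
  have Kle : M * q <= 2.
    case: (ltngtP c0 c1) neq => // h _.
      have : M * (q * c0 + q) <= M * (q * c1).
        by rewrite leq_mul2l -mulnSr leq_mul2l h !orbT.
      rewrite mulnDr; lia.
    have : M * (q * c1 + q) <= M * (q * c0).
      by rewrite leq_mul2l -mulnSr leq_mul2l h !orbT.
    rewrite mulnDr; lia.
  have M2 : 2 <= M.
    rewrite /M; have : 3 <= q * p by rewrite -(mul1n 3) leq_mul.
    lia.
  have q1 : q = 1.
    have : 2 * q <= M * q by rewrite leq_mul2r M2 orbT.
    lia.
  subst q; split => //.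
  move: Kle; rewrite /M muln1 mul1n; lia.
case=> -> ->.
exists (fun i : 'I_(1 * 3) => i.+1).
have vf : vertex_labeling (fun i : 'I_(1 * 3) => i.+1).
  split; first by move=> x y [] /val_inj.
  by move=> v; rewrite /= ltn_ord.
split => //.
have K0 := @key 3 1 _ 0 (isT : prime 3) isT vf; have K1 := @key 3 1 _ 1 (isT : prime 3) isT vf.
have [l0 l1 l2] := lbl3.
have c0 : Cnt 3 0 = 2 by rewrite /Cnt !big_ord_recr big_ord0 /= ?l0 ?l1 ?l2.
have c1 : Cnt 3 1 = 1 by rewrite /Cnt !big_ord_recr big_ord0 /= ?l0 ?l1 ?l2.
rewrite c0 in K0; rewrite c1 in K1.
lia.
Qed.
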